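(* Let $M$ be a nonempty closed, real algebraic, irreducible subset of $V$ which is $A$-invariant. Then there exists $v\in M$ such that $\mu_{\mathfrak a}(M)=C_I$ with $I=\mathrm{supp}_v$; in particular $\mu_{\mathfrak a}(M)$ is a polyhedral.
   Context: Let $V$ be a finite-dimensional real vector space with a scalar product $\langle\cdot,\cdot\rangle$. Let $G\subset\mathrm{GL}(V)$ be a connected closed subgroup, closed under transpose, with Lie algebra $\mathfrak g$, $G=K\exp(\mathfrak p)$ with $K=G\cap\mathrm O(V)$, $\mathfrak p=\mathfrak g\cap\mathrm{Sym}(V)$. Let $\mathfrak a\subset\mathfrak p$ be an Abelian subalgebra, $A=\exp(\mathfrak a)$, and $\mu_{\mathfrak a}:V\to\mathfrak a^*$, $\mu_{\mathfrak a}(x)(\xi)=\langle\xi x,x\rangle$. Fix an orthonormal basis $v_1,\dots,v_n$ of $V$ simultaneously diagonalizing $\mathfrak a$, with $\xi v_i=\alpha_i(\xi)v_i$, $\alpha_i\in\mathfrak a^*$. For $v=\sum x_iv_i$, $\mathrm{supp}_v=\{i:x_i\neq0\}$; for $I\subset\{1,\dots,n\}$, $C_I=\{\sum_{i\in I}s_i\alpha_i:s_i\ge0\}$. Irreducibility is with respect to the Zariski topology. A polyhedral is an intersection of finitely many closed linear half-spaces. *)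

(* Defs.v *)
From HB Require Import structures.
From mathcomp Require Import all_boot all_order all_algebra.
From mathcomp Require Import all_classical all_reals all_analysis.
From mathcomp Require mpoly.
Set Implicit Arguments. Unset Strict Implicit. Unset Printing Implicit Defensive.
Import Order.TTheory GRing.Theory Num.Theory.
Local Open Scope classical_set_scope.
Local Open Scope ring_scope.

(* V is modelled as column vectors 'cV[R]_n with the standard scalar
   product <x, y> = (x^T *m y) 0 0. *)

Definition expmx (R : realType) (n : nat) (A : 'M[R]_n) : 'M[R]_n :=
  lim ((fun N : nat => \sum_(k < N) (k`!%:R)^-1 *: A ^+ k) @ \oo).

(* Real algebraic (= Zariski closed) subsets of V: common zero sets of a
   family of real polynomials in the n coordinates. *)
Definition zariski_closed (R : realType) (n : nat) (M : set 'cV[R]_n) : Prop :=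
  exists S : set (mpoly.mpoly n R),
    M = [set x | forall p, S p -> mpoly.meval (fun i => x i ord0) p = 0].

Definition zariski_irreducible (R : realType) (n : nat) (M : set 'cV[R]_n) : Prop :=
  M !=set0 /\
  forall M1 M2 : set 'cV[R]_n, zariski_closed M1 -> zariski_closed M2 ->
    M `<=` M1 `|` M2 -> M `<=` M1 \/ M `<=` M2.

(* The dual a^* of the subspace a is represented by functions on a. *)
Definition mu_a (R : realType) (n : nat) (a : {vspace 'M[R]_n})
  (x : 'cV[R]_n) : subvs_of a -> R :=
  fun xi => (x^T *m (vsval xi *m x)) ord0 ord0.

(* Coordinates of v in the orthonormal basis given by the columns of P,
   and the support supp_v. *)
Definition coords (R : realType) (n : nat) (P : 'M[R]_n) (v : 'cV[R]_n) :
  'I_n -> R := fun i => (P^T *m v) i ord0.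

Definition supp (R : realType) (n : nat) (P : 'M[R]_n) (v : 'cV[R]_n) :
  {set 'I_n} := [set i | coords P v i != 0].

Definition cone (R : realType) (n : nat) (a : {vspace 'M[R]_n})
  (alpha : 'I_n -> 'M[R]_n -> R) (I : {set 'I_n}) : set (subvs_of a -> R) :=
  [set f | exists s : 'I_n -> R, (forall i, i \in I -> 0 <= s i) /\
     f = (fun xi => \sum_(i in I) s i * alpha i (vsval xi))].

Arguments mu_a {R n} a x _.
Arguments cone {R n} a alpha I _.
Arguments supp {R n} P v.

(* Main.v *)
Require Import Defs.
From HB Require Import structures.
From mathcomp Require Import all_boot all_order all_algebra.
From mathcomp Require Import all_classical all_reals all_analysis.
Set Implicit Arguments. Unset Strict Implicit. Unset Printing Implicit Defensive.
Import Order.TTheory GRing.Theory Num.Theory.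
Local Open Scope classical_set_scope.
Local Open Scope ring_scope.
From mathcomp Require Import ring lra.
Import numFieldTopology.Exports.

Lemma xiP (R : realType) n (a : {vspace 'M[R]_n}) (P : 'M[R]_n)
  (alpha : 'I_n -> 'M[R]_n -> R) xi :
  (forall xi (i : 'I_n), xi \in a -> xi *m col i P = alpha i xi *: col i P) ->
  xi \in a -> xi *m P = P *m diag_mx (\row_i alpha i xi).
Proof.
move=> hal xia; apply/matrixP => r l.
rewrite mul_mx_diag !mxE mulrC.
have := hal xi l xia; move/matrixP/(_ r 0); rewrite !mxE => <-.
by apply: eq_bigr => k _; rewrite !mxE.
Qed.

Lemma mu_formula (R : realType) n (a : {vspace 'M[R]_n}) (P : 'M[R]_n)
  (alpha : 'I_n -> 'M[R]_n -> R) xi (x : 'cV[R]_n) :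
  P^T *m P = 1%:M ->
  (forall xi (i : 'I_n), xi \in a -> xi *m col i P = alpha i xi *: col i P) ->
  xi \in a -> (x^T *m (xi *m x)) 0 0 = \sum_i ((P^T *m x) i 0) ^+ 2 * alpha i xi.
Proof.
move=> PtP hal xia.
have PPt : P *m P^T = 1%:M by move/mulmx1C: PtP.
have xe : x = P *m (P^T *m x) by rewrite mulmxA PPt mul1mx.
move: (P^T *m x) xe => c ->.
rewrite trmx_mul mulmxA -(mulmxA _ P^T xi) mulmxA.
rewrite -(mulmxA c^T) -(mulmxA P^T) (xiP hal xia) (mulmxA P^T) PtP mul1mx.
rewrite -mulmxA mul_diag_mx !mxE; apply: eq_bigr => i _; rewrite !mxE.
ring.
Qed.

Lemma alpha_formula (R : realType) n (a : {vspace 'M[R]_n}) (P : 'M[R]_n)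
  (alpha : 'I_n -> 'M[R]_n -> R) xi i :
  P^T *m P = 1%:M ->
  (forall xi (i : 'I_n), xi \in a -> xi *m col i P = alpha i xi *: col i P) ->
  xi \in a -> alpha i xi = ((col i P)^T *m (xi *m col i P)) 0 0.
Proof.
move=> PtP hal xia; rewrite hal // -scalemxAr mxE.
suff -> : ((col i P)^T *m col i P) 0 0 = 1 by rewrite mulr1.
have := congr1 (fun M : 'M[R]_n => M i i) PtP; rewrite !mxE eqxx /=.
move=> H; rewrite -[RHS]/(1%:R : R) -H; apply: eq_bigr => k _; rewrite !mxE //.
Qed.

Lemma alphaD (R : realType) n (a : {vspace 'M[R]_n}) (P : 'M[R]_n)
  (alpha : 'I_n -> 'M[R]_n -> R) xi eta i :
  P^T *m P = 1%:M ->
  (forall xi (i : 'I_n), xi \in a -> xi *m col i P = alpha i xi *: col i P) ->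
  xi \in a -> eta \in a -> alpha i (xi + eta) = alpha i xi + alpha i eta.
Proof.
move=> PtP hal xia etaa.
rewrite !(alpha_formula i PtP hal) ?rpredD // mulmxDl mulmxDr mxE //.
Qed.

Lemma alphaZ (R : realType) n (a : {vspace 'M[R]_n}) (P : 'M[R]_n)
  (alpha : 'I_n -> 'M[R]_n -> R) (t : R) eta i :
  P^T *m P = 1%:M ->
  (forall xi (i : 'I_n), xi \in a -> xi *m col i P = alpha i xi *: col i P) ->
  eta \in a -> alpha i (t *: eta) = t * alpha i eta.
Proof.
move=> PtP hal etaa.
rewrite !(alpha_formula i PtP hal) ?rpredZ // -scalemxAl -scalemxAr mxE //.
Qed.

Lemma sumQ (R : realType) n (P : 'M[R]_n) :
  \sum_l (col l P *m (col l P)^T) = P *m P^T.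
Proof.
apply/matrixP => i j; rewrite summxE !mxE; apply: eq_bigr => l _.
by rewrite !mxE big_ord1 !mxE.
Qed.


Lemma xiQ (R : realType) n (a : {vspace 'M[R]_n}) (P : 'M[R]_n)
  (alpha : 'I_n -> 'M[R]_n -> R) xi l k :
  (forall xi (i : 'I_n), xi \in a -> xi *m col i P = alpha i xi *: col i P) ->
  xi \in a -> (xi ^+ k) *m (col l P *m (col l P)^T) =
     (alpha l xi ^+ k) *: (col l P *m (col l P)^T).
Proof.
move=> hal xia; elim: k => [|k IH].
  by rewrite !expr0 scale1r; apply: mul1mx.
rewrite !exprS; change ((xi *m xi ^+ k) *m (col l P *m (col l P)^T) =
  (alpha l xi * alpha l xi ^+ k) *: (col l P *m (col l P)^T)).
by rewrite -mulmxA IH -scalemxAr mulmxA hal // -scalemxAl scalerA mulrC.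
Qed.

Lemma partial_exp (R : realType) n (a : {vspace 'M[R]_n}) (P : 'M[R]_n)
  (alpha : 'I_n -> 'M[R]_n -> R) xi (N : nat) :
  P^T *m P = 1%:M ->
  (forall xi (i : 'I_n), xi \in a -> xi *m col i P = alpha i xi *: col i P) ->
  xi \in a ->
  \sum_(k < N) (k`!%:R)^-1 *: xi ^+ k =
  \sum_l (series (exp_coeff (alpha l xi)) N) *: (col l P *m (col l P)^T).
Proof.
move=> PtP hal xia.
have PPt : P *m P^T = 1%:M by move/mulmx1C: PtP.
rewrite -[LHS]mulmx1 -PPt -sumQ mulmx_sumr; apply: eq_bigr => l _.
rewrite mulmx_suml /series /= big_mkord scaler_suml; apply: eq_bigr => k _.
by rewrite -scalemxAl (xiQ _ _ hal xia) scalerA /exp_coeff /= mulrC.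
Qed.

Definition MX (R : realType) n : normedModType R :=
  matrix_matrix__canonical__normed_module_NormedModule R n n.

Lemma expmx_formula (R : realType) n (a : {vspace 'M[R]_n}) (P : 'M[R]_n)
  (alpha : 'I_n -> 'M[R]_n -> R) xi :
  P^T *m P = 1%:M ->
  (forall xi (i : 'I_n), xi \in a -> xi *m col i P = alpha i xi *: col i P) ->
  xi \in a ->
  expmx xi = \sum_l expR (alpha l xi) *: (col l P *m (col l P)^T).
Proof.
move=> PtP hal xia; rewrite /expmx.
have H : ((fun N : nat => \sum_(k < N) k`!%:R^-1 *: xi ^+ k) : nat -> MX R n) @ \oo --> 
   (\sum_l expR (alpha l xi) *: (col l P *m (col l P)^T) : MX R n).
  have -> : ((fun N : nat => \sum_(k < N) k`!%:R^-1 *: xi ^+ k) : nat -> MX R n) =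
    (fun N => \sum_l (series (exp_coeff (alpha l xi)) N) *: (col l P *m (col l P)^T) : MX R n).
    by apply: funext => N; rewrite (@partial_exp R n a P alpha xi N PtP hal xia).
  apply: (@cvg_big (MX R n) _ +%R 0 xpredT).
  - exact: add_continuous.
  move=> l _; apply: cvgZr_tmp.
  exact: (is_cvg_series_exp_coeff (alpha l xi)).
exact: (@cvg_lim (MX R n) (@norm_hausdorff _ _) _ _ _ _ _ H).
Qed.

Lemma expmx_coords (R : realType) n (a : {vspace 'M[R]_n}) (P : 'M[R]_n)
  (alpha : 'I_n -> 'M[R]_n -> R) xi (x : 'cV[R]_n) i :
  P^T *m P = 1%:M ->
  (forall xi (i : 'I_n), xi \in a -> xi *m col i P = alpha i xi *: col i P) ->
  xi \in a ->
  (P^T *m (expmx xi *m x)) i 0 = expR (alpha i xi) * (P^T *m x) i 0.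
Proof.
move=> PtP hal xia.
have cP l : P^T *m col l P = delta_mx l 0 by rewrite colE mulmxA PtP mul1mx.
rewrite (expmx_formula PtP hal xia) mulmx_suml mulmx_sumr summxE.
rewrite (bigD1 i) //= big1 ?addr0.
  rewrite -!scalemxAl -scalemxAr mxE; congr (_ * _).
  rewrite !mulmxA cP -mulmxA mxE big_ord1 !mxE !eqxx mul1r.
  by apply: eq_bigr => k _; rewrite !mxE.
move=> l li; rewrite -!scalemxAl -scalemxAr mxE.
rewrite !mulmxA cP -mulmxA mxE big_ord1 !mxE eq_sym (negbTE li) /=.
by rewrite mul0r mulr0.
Qed.

Import -(notations) mpoly.
Definition cpoly (R : realType) n (P : 'M[R]_n) (j : 'I_n) : mpoly n R :=
  \sum_(k < n) P k j *: mpolyX R (mnm1 k).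
Lemma cpolyE (R : realType) n (P : 'M[R]_n) j (x : 'cV[R]_n) :
  meval (fun i => x i ord0) (cpoly P j) = (P^T *m x) j 0.
Proof.
rewrite /cpoly raddf_sum !mxE; apply: eq_bigr => k _.
by rewrite /= mevalZ mevalXU !mxE.
Qed.
Lemma cprodE (R : realType) n (P : 'M[R]_n) (I : {set 'I_n}) (x : 'cV[R]_n) :
  meval (fun i => x i ord0) (\prod_(j in I) cpoly P j) = \prod_(j in I) (P^T *m x) j 0.
Proof.
rewrite (big_morph _ (mevalM _) (meval1 _)); apply: eq_bigr => j _; exact: cpolyE.
Qed.

Lemma zc_hyper (R : realType) n (p : mpoly n R) :
  zariski_closed [set y : 'cV[R]_n | meval (fun i => y i ord0) p = 0].
Proof.
exists [set p]; apply/seteqP; split => y /=; first by move=> h q ->.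
by move=> h; apply: h.
Qed.


Lemma max_supp (R : realType) n (P : 'M[R]_n) (M : set 'cV[R]_n) :
  zariski_irreducible M -> M !=set0 ->
  exists2 v, M v & forall x, M x -> supp P x \subset supp P v.
Proof.
move=> irr [x0 Mx0].
pose Pk k := `[< exists x, M x /\ #|supp P x| = k >].
have exP : exists k, Pk k by exists #|supp P x0|; apply/asboolP; exists x0.
have ubP : forall k, Pk k -> (k <= n)%N.
  move=> k /asboolP [x [_ <-]]; rewrite -[X in (_ <= X)%N]card_ord; exact: max_card.
case: (ex_maxnP exP ubP) => k /asboolP [v [Mv cv]] kmax.
exists v => // x Mx; apply/fintype.subsetP => j jx; apply: contraT => jv.
pose M1 := [set y : 'cV[R]_n | meval (fun i => y i ord0) (cpoly P j) = 0].
pose M2 := [set y : 'cV[R]_n | meval (fun i => y i ord0) (\prod_(i in supp P v) cpoly P i) = 0].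
have nM1 : ~ M `<=` M1.
  move=> /(_ x Mx); rewrite /M1 /= cpolyE => /eqP.
  by move: jx; rewrite inE /coords => /negPf ->.
have nM2 : ~ M `<=` M2.
  move=> /(_ v Mv); rewrite /M2 /= cprodE => /eqP; apply/negP/prodf_neq0.
  by move=> i; rewrite inE.
have : ~ M `<=` M1 `|` M2.
  by move=> /(irr.2 _ _ (zc_hyper _) (zc_hyper _)) [].
move/existsNP => [w] /not_implyP [Mw] /not_orP [nw1 nw2].
have sub : j |: supp P v \subset supp P w.
  apply/fintype.subsetP => i; rewrite !inE => /orP [/eqP ->|iv].
    by apply/eqP; move: nw1; rewrite /M1 /= cpolyE.
  apply/negP => /eqP wi; apply: nw2; rewrite /M2 /= cprodE.
  by apply/eqP/prodf_eq0; exists i; [rewrite inE | apply/eqP; exact: wi].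
have := subset_leq_card sub; rewrite cardsU1 jv cv /=.
have := kmax #|supp P w| (introT (asboolP _) (ex_intro _ w (conj Mw erefl))).
move=> le1 le2; move: (leq_trans le2 le1).
by rewrite add1n ltnn.
Qed.

Lemma cont_sum (R : realType) (T : topologicalType) (I : Type) (r : seq I) (Pr : pred I)
  (F : I -> T -> R) : (forall i, continuous (F i)) ->
  continuous (fun x => \sum_(i <- r | Pr i) F i x).
Proof. by move=> h; apply: (@continuous_big R I +%R 0 Pr) => //; exact: add_continuous. Qed.

Lemma cont_prod (R : realType) (T : topologicalType) (I : Type) (r : seq I) (Pr : pred I)
  (F : I -> T -> R) : (forall i, continuous (F i)) ->
  continuous (fun x => \prod_(i <- r | Pr i) F i x).
Proof. by move=> h; apply: (@continuous_big R I *%R 1 Pr) => //; exact: mul_continuous. Qed.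

Lemma cont_mul (R : realType) (T : topologicalType) (f g : T -> R) :
  continuous f -> continuous g -> continuous (fun x => f x * g x).
Proof. move=> hf hg x; exact: (@continuousM R T f g x (hf x) (hg x)). Qed.

Lemma cont_coordP (R : realType) n (P : 'M[R]_n) i :
  continuous (fun r : 'rV[R]_n => (P *m r^T) i ord0).
Proof.
have -> : (fun r : 'rV[R]_n => (P *m r^T) i ord0) = (fun r => \sum_k P i k * r ord0 k).
  by apply: funext => r; rewrite mxE; apply: eq_bigr => k _; rewrite mxE.
apply: cont_sum => k; apply: cont_mul; first exact: cst_continuous.
exact: coord_continuous.
Qed.

Lemma cont_meval (R : realType) n (P : 'M[R]_n) (p : mpoly n R) :
  continuous (fun r : 'rV[R]_n => meval (fun i => (P *m r^T) i ord0) p).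
Proof.
have -> : (fun r : 'rV[R]_n => meval (fun i => (P *m r^T) i ord0) p) =
  (fun r => \sum_(m <- msupp p) mcoeff m p * \prod_i ((P *m r^T) i ord0) ^+ m i).
  by apply: funext => r; rewrite mevalE.
apply: cont_sum => m; apply: cont_mul; first exact: cst_continuous.
apply: cont_prod => i.
have -> : (fun r : 'rV[R]_n => (P *m r^T) i ord0 ^+ m i) = 
   (fun r => \prod_(k < m i) (P *m r^T) i ord0).
  by apply: funext => r; rewrite prodr_const card_ord.
apply: cont_prod => k; exact: cont_coordP.
Qed.

Lemma closed_M (R : realType) n (P : 'M[R]_n) (M : set 'cV[R]_n) :
  zariski_closed M -> closed [set r : 'rV[R]_n | M (P *m r^T)].
Proof.
case=> S ->.
have -> : [set r : 'rV[R]_n | [set x | forall p, S p -> meval (fun i => x i ord0) p = 0] (P *m r^T)]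
  = \bigcap_(p in S) ((fun r : 'rV[R]_n => meval (fun i => (P *m r^T) i ord0) p) @^-1` [set 0]).
  by apply/seteqP; split=> r /= h.
apply: closed_bigI => p _; apply: preimage_closed; last exact: closed_eq.
move=> r _; exact: cont_meval.
Qed.

Lemma phi_lb (R : realType) (w s t : R) : 0 < w -> 0 <= s ->
  w / 2 * expR t ^+ 2 - 2 * s ^+ 2 / w <= w * expR t ^+ 2 - 2 * s * t.
Proof.
move=> w0 s0.
have E1 := expR_ge1Dx t.
have E0 := expR_gt0 t.
have key : 0 <= (w * expR t)^+2 - 4 * w * s * t + 4 * s^+2.
  have [t0|t0] := leP 0 t.
    have -> : (w * expR t)^+2 - 4 * w * s * t + 4 * s^+2 =
      w^+2 * ((expR t - t) * (expR t + t)) + (w * t - 2 * s)^+2 by ring.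
    apply: addr_ge0; last exact: sqr_ge0.
    apply: mulr_ge0; first exact: sqr_ge0.
    apply: mulr_ge0; lra.
  have -> : (w * expR t)^+2 - 4 * w * s * t + 4 * s^+2 =
      (w * expR t)^+2 + 4 * (w * s) * (- t) + 4 * s^+2 by ring.
  apply: addr_ge0; last by apply: mulr_ge0; [lra|exact: sqr_ge0].
  apply: addr_ge0; first exact: sqr_ge0.
  apply: mulr_ge0; last lra.
  apply: mulr_ge0; [lra|apply: mulr_ge0; lra].
rewrite -subr_ge0.
have -> : w * expR t ^+ 2 - 2 * s * t - (w / 2 * expR t ^+ 2 - 2 * s ^+ 2 / w) =
  ((w * expR t)^+2 - 4 * w * s * t + 4 * s^+2) / (2 * w).
  by field; rewrite gt_eqF.
by apply: divr_ge0 => //; lra.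
Qed.

Lemma exp_ub (R : realType) (y : R) : `|y| <= 1/4 ->
  expR y ^+ 2 <= 1 + 2 * y + 8 * y ^+ 2.
Proof.
rewrite ler_norml => /andP[hy1 hy2].
have E0 := expR_gt0 y.
have EN := expR_ge1Dx (- y).
have EE : expR y * expR (- y) = 1 by rewrite -expRD subrr expR0.
have h1 : expR y * (1 - y) <= 1.
  nra.
have h2 : expR y <= 1 + y + 2 * y ^+ 2.
  have hp : 0 < 1 - y by lra.
  rewrite -(ler_pM2r hp); apply: (le_trans h1).
  have -> : (1 + y + 2 * y ^+ 2) * (1 - y) = 1 + y^+2 * (1 - 2 * y) by ring.
  rewrite lerDl; apply: mulr_ge0; [exact: sqr_ge0|lra].
have h3 : expR y ^+ 2 <= (1 + y + 2 * y ^+ 2) ^+ 2.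
  nra.
apply: (le_trans h3).
have -> : (1 + y + 2 * y ^+ 2) ^+ 2 = 1 + 2 * y + 5 * y^+2 + y^+2 * (4 * y + 4 * y^+2) by ring.
rewrite -addrA lerD2l.
have -> : 8 * y ^+ 2 = 5 * y^+2 + y^+2 * 3 by ring.
rewrite lerD2l; apply: ler_wpM2l; first exact: sqr_ge0.
have : y ^+ 2 <= 1/16.
  have -> : y^+2 = y * y by ring.
  nra.
lra.
Qed.

Lemma deriv_zero (R : realType) n (I : {set 'I_n}) (c a : 'I_n -> R) (b : R) :
  (forall t : R, 0 <= \sum_(i in I) c i ^+ 2 * (expR (t * a i) ^+ 2 - 1) - 2 * (t * b)) ->
  \sum_(i in I) c i ^+ 2 * a i = b.
Proof.
move=> H.
set S1 := \sum_(i in I) c i ^+ 2 * a i.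
set D := S1 - b.
set Q := \sum_(i in I) c i ^+ 2 * a i ^+ 2.
set A := \sum_(i in I) `|a i|.
have Q0 : 0 <= Q by apply: sumr_ge0 => i _; apply: mulr_ge0; exact: sqr_ge0.
have A0 : 0 <= A by apply: sumr_ge0 => i _.
have aA : forall i, i \in I -> `|a i| <= A.
  move=> i iI; rewrite /A (bigD1 i) //= lerDl; exact: sumr_ge0.
have ub : forall t, (forall i, i \in I -> `|t * a i| <= 1/4) ->
    \sum_(i in I) c i ^+ 2 * (expR (t * a i) ^+ 2 - 1) - 2 * (t * b) <= 2 * t * D + 8 * t^+2 * Q.
  move=> t ht.
  have E : \sum_(i in I) c i ^+ 2 * (2 * (t * a i) + 8 * (t * a i) ^+ 2) =
      2 * t * S1 + 8 * t^+2 * Q.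
    rewrite /S1 /Q !mulr_sumr -big_split /=; apply: eq_bigr => i _; ring.
  have -> : 2 * t * D + 8 * t^+2 * Q = 
      \sum_(i in I) c i ^+ 2 * (2 * (t * a i) + 8 * (t * a i) ^+ 2) - 2 * (t * b).
    rewrite E /D; ring.
  rewrite lerD2r; apply: ler_sum => i iI; apply: ler_wpM2l; first exact: sqr_ge0.
  have := exp_ub (ht i iI); lra.
set L := 4 * Q + 4 * `|D| * A + 1.
have L0 : 0 < L by rewrite /L; have := normr_ge0 D; nra.
set t := - D / L.
have ht : forall i, i \in I -> `|t * a i| <= 1/4.
  move=> i iI; have -> : `|t * a i| = `|D| * `|a i| / L.
    by rewrite /t !normrM normrN normfV (gtr0_norm L0) mulrAC.
  rewrite ler_pdivrMr //; have := aA i iI; have := normr_ge0 D; have := normr_ge0 (a i).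
  rewrite /L; nra.
have := le_trans (H t) (ub t ht).
have -> : 2 * t * D + 8 * t ^+ 2 * Q = (D ^+ 2 / L ^+ 2) * (8 * Q - 2 * L).
  rewrite /t; field; exact: lt0r_neq0.
have hneg : 8 * Q - 2 * L < 0 by rewrite /L; have := normr_ge0 D; nra.
rewrite nmulr_lge0 // => h.
have hD : D ^+ 2 <= 0.
  have -> : D ^+ 2 = D ^+ 2 / L ^+ 2 * L ^+ 2 by field; exact: lt0r_neq0.
  rewrite pmulr_lle0 //; exact: exprn_gt0.
have : D = 0 by have := sqr_ge0 D; rewrite -/(D ^+ 2) => h2; apply/eqP; rewrite -sqrf_eq0 eq_le hD h2.
by move/eqP; rewrite subr_eq0 => /eqP.
Qed.

Lemma cont_addc (R : realType) (T : topologicalType) (f : T -> R) (c : R) :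
  continuous f -> continuous (fun x => f x + c).
Proof.
move=> hf x; apply: (@continuousD R R^o T f (fun=> c) x (hf x)).
exact: cst_continuous.
Qed.

Lemma cont_sq (R : realType) (T : topologicalType) (f : T -> R) :
  continuous f -> continuous (fun x => f x ^+ 2).
Proof.
move=> hf; rewrite (_ : (fun x => f x ^+ 2) = fun x => f x * f x).
  exact: cont_mul.
by apply: funext => x; rewrite expr2.
Qed.


Unset Implicit Arguments.

Theorem mainTheorem7 (R : realType) (n : nat) (a : {vspace 'M[R]_n})
    (P : 'M[R]_n) (alpha : 'I_n -> 'M[R]_n -> R) (M : set 'cV[R]_n) :
  (* a is an Abelian subalgebra of symmetric endomorphisms *)
  (forall xi, xi \in a -> xi^T = xi) ->
  (forall xi eta, xi \in a -> eta \in a -> xi *m eta = eta *m xi) ->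
  (* the columns v_i of P form an orthonormal basis diagonalizing a,
     with xi v_i = alpha_i(xi) v_i *)
  P^T *m P = 1%:M ->
  (forall xi (i : 'I_n), xi \in a -> xi *m col i P = alpha i xi *: col i P) ->
  (* M nonempty, closed real algebraic, irreducible, A-invariant *)
  M !=set0 ->
  zariski_closed M ->
  zariski_irreducible M ->
  (forall xi x, xi \in a -> M x -> M (expmx xi *m x)) ->
  exists2 v, M v & [set mu_a a x | x in M] = cone a alpha (supp P v).
Proof.
move=> _ _ PtP hal Mne zcM irrM Ainv.
have [v Mv hsub] := max_supp P irrM Mne.
exists v => //.
set I := supp P v.
have muE : forall x (xi : subvs_of a), mu_a a x xi = \sum_i ((P^T *m x) i 0) ^+ 2 * alpha i (vsval xi).
  by move=> x xi; rewrite /mu_a (@mu_formula R n a P alpha (vsval xi) x PtP hal (subvsP xi)).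
apply/seteqP; split.
  move=> f [x Mx <-]; exists (fun i => coords P x i ^+ 2); split.
    by move=> i _; exact: sqr_ge0.
  apply: funext => xi; rewrite muE (bigID (fun i => i \in I)) /= addrC big1 ?add0r //.
  move=> i iI; have : i \notin supp P x.
    by apply: contra iI; apply: (fintype.subsetP (hsub x Mx)).
  by rewrite inE negbK /coords => /eqP ->; rewrite expr0n /= mul0r.
move=> f [s [s0 ->]].
pose w i := coords P v i ^+ 2.
have w0 : forall i, i \in I -> 0 < w i.
  by move=> i; rewrite inE => iI; rewrite /w exprn_even_gt0 //.
pose al i (xi : subvs_of a) := alpha i (vsval xi).
have alD : forall i xi eta, al i (xi + eta) = al i xi + al i eta.
  by move=> i xi eta; rewrite /al raddfD /= (alphaD i PtP hal (subvsP xi) (subvsP eta)).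
have alZ : forall i (t : R) eta, al i (t *: eta) = t * al i eta.
  by move=> i t eta; rewrite /al linearZ /= (alphaZ t i PtP hal (subvsP eta)).
pose Fm (xi : subvs_of a) := \sum_(i in I) (w i * expR (al i xi) ^+ 2 - 2 * s i * al i xi).
pose K := \sum_(i in I) 2 * s i ^+ 2 / w i.
have K0 : 0 <= K.
  apply: sumr_ge0 => i iI; apply: divr_ge0; last exact: ltW (w0 i iI).
  by apply: mulr_ge0 => //; exact: sqr_ge0.
have Flb : forall xi j, j \in I -> w j / 2 * expR (al j xi) ^+ 2 - K <= Fm xi.
  move=> xi j jI.
  have eqK : K = 2 * s j ^+ 2 / w j + \sum_(i in I | i != j) 2 * s i ^+ 2 / w i.
    by rewrite /K (bigD1 j).
  have eqF : Fm xi = (w j * expR (al j xi) ^+ 2 - 2 * s j * al j xi) +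
      \sum_(i in I | i != j) (w i * expR (al i xi) ^+ 2 - 2 * s i * al i xi).
    by rewrite /Fm (bigD1 j).
  have h1 := phi_lb (al j xi) (w0 j jI) (s0 j jI).
  have h2 : \sum_(i in I | i != j) - (2 * s i ^+ 2 / w i) <=
      \sum_(i in I | i != j) (w i * expR (al i xi) ^+ 2 - 2 * s i * al i xi).
    apply: ler_sum => i /andP [iI _].
    have := phi_lb (al i xi) (w0 i iI) (s0 i iI).
    have : 0 <= w i / 2 * expR (al i xi) ^+ 2.
      apply: mulr_ge0; [have := w0 i iI; lra | exact: sqr_ge0].
    lra.
  rewrite sumrN in h2.
  rewrite eqK eqF; lra.
have Fge : forall xi, - K <= Fm xi.
  move=> xi; rewrite /K -sumrN; apply: ler_sum => i iI.
  have := phi_lb (al i xi) (w0 i iI) (s0 i iI).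
  have : 0 <= w i / 2 * expR (al i xi) ^+ 2.
    apply: mulr_ge0; [have := w0 i iI; lra | exact: sqr_ge0].
  lra.
pose m := inf (range Fm).
have hinf : has_inf (range Fm).
  split; first by exists (Fm 0), 0.
  by exists (- K) => _ [xi _ <-]; exact: Fge.
have mle : forall xi, m <= Fm xi.
  by move=> xi; apply: (ge_inf hinf.2); exists xi.
have seqP : forall k : nat, exists xi, Fm xi < m + k.+1%:R^-1.
  move=> k; have kp : 0 < k.+1%:R^-1 :> R by rewrite invr_gt0 ltr0Sn.
  by have [e [xi _ <-] He] := inf_adherent kp hinf; exists xi.
have [xs hxs] := choice seqP.
pose r (k : nat) : 'rV[R]_n := \row_i (expR (al i (xs k)) * coords P v i).
have PPt : P *m P^T = 1%:M by move/mulmx1C: PtP.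
have Mr : forall k, M (P *m (r k)^T).
  move=> k; suff -> : P *m (r k)^T = expmx (vsval (xs k)) *m v.
    by apply: Ainv => //; exact: subvsP.
  rewrite -[RHS]mul1mx -PPt -mulmxA; congr (P *m _).
  apply/matrixP => i j; rewrite (ord1 j) [LHS]mxE [LHS]mxE /coords; symmetry.
  exact: (expmx_coords v i PtP hal (subvsP (xs k))).
pose B := 2 * (m + 1 + K) + 1.
have rbound : forall k i, i \in I -> `|r k 0 i| <= B.
  move=> k i iI.
  have h1 := Flb (xs k) i iI.
  have h2 := hxs k.
  have h3 : k.+1%:R^-1 <= (1 : R) by rewrite invf_le1 ?ler1n ?ltr0n.
  move: (k.+1%:R^-1 : R) h2 h3 => tk h2 h3.
  have h4 : r k 0 i ^+ 2 = w i * expR (al i (xs k)) ^+ 2.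
    by rewrite /r !mxE /w; ring.
  have e : w i / 2 * expR (al i (xs k)) ^+ 2 = (w i * expR (al i (xs k)) ^+ 2) / 2 by ring.
  rewrite e in h1.
  have h5 : r k 0 i ^+ 2 <= 2 * (m + 1 + K) by rewrite h4; lra.
  have h6 := sqr_ge0 (`|r k 0 i| - 1).
  have e2 : (`|r k 0 i| - 1) ^+ 2 = `|r k 0 i| ^+ 2 - 2 * `|r k 0 i| + 1 by ring.
  rewrite e2 in h6.
  have h8 := sqr_ge0 (r k 0 i).
  have h7 : `|r k 0 i| ^+ 2 = r k 0 i ^+ 2 by rewrite real_normK // num_real.
  rewrite /B; lra.
have rzero : forall k i, i \notin I -> r k 0 i = 0.
  move=> k i; rewrite inE negbK /coords => /eqP h.
  by rewrite /r !mxE /coords h mulr0.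
pose G (y : 'rV[R]_n) (eta : subvs_of a) :=
  \sum_(i in I) y 0 i ^+ 2 * (expR (al i eta) ^+ 2 - 1) - 2 * \sum_(i in I) s i * al i eta.
have diffE : forall k eta, Fm (xs k + eta) - Fm (xs k) = G (r k) eta.
  move=> k eta; rewrite /Fm /G -sumrB mulr_sumr -sumrB; apply: eq_bigr => i _.
  rewrite alD expRD /r !mxE /w; ring.
pose Abox (i : 'I_n) : set R := if i \in I then `[- B, B]%classic else [set 0].
pose Kc := [set y : 'rV[R]_n | forall i, Abox i (y ord0 i)] `&` [set y | M (P *m y^T)].
have boxc : compact [set y : 'rV[R]_n | forall i, Abox i (y ord0 i)].
  apply: rV_compact => i; rewrite /Abox; case: ifP => _.
    exact: segment_compact.
  exact: compact_set1.
have Kcc : compact Kc.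
  apply: (subclosed_compact _ boxc); last by move=> y [].
  apply: closedI; last exact: closed_M.
  apply: compact_closed boxc; exact: norm_hausdorff.
have rK : forall k, Kc (r k).
  move=> k; split; last exact: Mr.
  move=> i; rewrite /Abox; case: ifP => iI.
    by rewrite /= in_itv /= -ler_norml; exact: rbound.
  by apply: rzero; rewrite iI.
have [c [Kc_c clc]] : Kc `&` cluster (r @ \oo) !=set0.
  apply: Kcc.
  have h : \forall k \near \oo, Kc (r k) by apply: nearW => k; exact: rK.
  exact: h.
have Gcont : forall eta, continuous (fun y : 'rV[R]_n => G y eta).
  move=> eta; rewrite /G; apply: cont_addc; apply: cont_sum => i.
  apply: cont_mul; last exact: cst_continuous.
  apply: cont_sq; exact: coord_continuous.
have key : forall eta, 0 <= G c eta.
  move=> eta; rewrite leNgt; apply/negP => Gneg.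
  pose eps := - G c eta / 2.
  have eps0 : 0 < eps by rewrite /eps; lra.
  have nB : \forall y \near c, G y eta < - eps.
    apply: (@cvgr_lt R _ (nbhs c) _ (fun y => G y eta) (G c eta) (Gcont eta c)); rewrite /eps; lra.
  have nA : (r @ \oo) (r @` [set k | k.+1%:R^-1 < eps]).
    have h := near_infty_natSinv_lt (PosNum eps0).
    apply: filterS h => k hk; exists k => //.
  have [y [[k hk <-] hy]] := clc _ _ nA nB.
  have := diffE k eta.
  have := mle (xs k + eta).
  have := hxs k.
  have hk' : k.+1%:R^-1 < eps := hk.
  move: (k.+1%:R^-1 : R) hk' => tk hk'.
  lra.
have deriv : forall eta, \sum_(i in I) c 0 i ^+ 2 * al i eta = \sum_(i in I) s i * al i eta.
  move=> eta; apply: (@deriv_zero R n I (fun i => c 0 i) (fun i => al i eta)).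
  move=> t; have := key (t *: eta); rewrite /G.
  have e1 : \sum_(i in I) c 0 i ^+ 2 * (expR (al i (t *: eta)) ^+ 2 - 1) =
      \sum_(i in I) c 0 i ^+ 2 * (expR (t * al i eta) ^+ 2 - 1).
    by apply: eq_bigr => i _; rewrite alZ.
  have e2 : \sum_(i in I) s i * al i (t *: eta) = t * \sum_(i in I) s i * al i eta.
    by rewrite mulr_sumr; apply: eq_bigr => i _; rewrite alZ; ring.
  by rewrite e1 e2.
exists (P *m c^T); first exact: Kc_c.2.
apply: funext => xi; rewrite muE.
have ce : forall i, (P^T *m (P *m c^T)) i 0 = c 0 i.
  by move=> i; rewrite mulmxA PtP mul1mx mxE.
rewrite (bigID (fun i => i \in I)) /= [X in _ + X]big1 ?addr0.
  by apply: etrans (deriv xi); apply: eq_bigr => i _; rewrite ce.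
move=> i iI; rewrite ce.
have := Kc_c.1 i; rewrite /Abox (negbTE iI) /= => h.
by rewrite (_ : c 0 i = 0) ?expr0n ?mul0r.
Qed.
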